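(* Let $m\ge1$ and let $q$ be an indeterminate. Over $\mathbb{Q}(q)$, with $m\times m$ matrices indexed by $[0,m-1]$, let $V_q=(q^{ij})_{i,j}$, $G_q=\bigl(\begin{bmatrix}i\\ j\end{bmatrix}\bigr)_{i,j}$ and $D_q$ the diagonal matrix with $i$th entry $[i]!\,(q-1)^i\,q^{\binom{i}{2}}$. Then \[ V_q\,(G_q^{-1})^{\mathrm T}=G_q\,D_q . \]
   Context: For integers $i\ge0$, $j\in\mathbb{Z}$: $[i]=(q^i-1)/(q-1)$, $[i]!=\prod_{k=1}^i[k]$, and $\begin{bmatrix}i\\ j\end{bmatrix}=[i]!/([j]![i-j]!)$ if $j\in[0,i]$, $0$ otherwise. $G_q$ is invertible (lower unitriangular); $^{\mathrm T}$ denotes transpose. *)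

(* Defs.v *)
From HB Require Import structures.
From mathcomp Require Import all_boot all_order all_algebra.
Set Implicit Arguments. Unset Strict Implicit. Unset Printing Implicit Defensive.
Import Order.TTheory GRing.Theory Num.Theory.
Local Open Scope ring_scope.

Definition Qq : fieldType := {fraction {poly rat}}.
Definition qX : Qq := tofrac ('X : {poly rat}).

Definition qint (i : nat) : Qq := (qX ^+ i - 1) / (qX - 1).
Definition qfact (i : nat) : Qq := \prod_(1 <= k < i.+1) qint k.
Definition qbinom (i j : nat) : Qq :=
  if (j <= i)%N then qfact i / (qfact j * qfact (i - j)) else 0.

Definition Vq (m : nat) : 'M[Qq]_m := \matrix_(i < m, j < m) qX ^+ (i * j).
Definition Gq (m : nat) : 'M[Qq]_m := \matrix_(i < m, j < m) qbinom i j.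
Definition Dq (m : nat) : 'M[Qq]_m :=
  diag_mx (\row_(i < m) (qfact i * (qX - 1) ^+ i * qX ^+ 'C(i, 2))).

(* Main.v *)
Require Import Defs.
From mathcomp Require Import all_boot all_order all_algebra.
From mathcomp Require Import ring.
Set Implicit Arguments. Unset Strict Implicit. Unset Printing Implicit Defensive.
Import GRing.Theory.
Local Open Scope ring_scope.

Lemma qXn1 k : (0 < k)%N -> qX ^+ k - 1 != 0.
Proof.
move=> k0; rewrite /qX -rmorphXn -(rmorph1 (@tofrac _)) -rmorphB tofrac_eq0.
rewrite -size_poly_eq0 -polyC1 size_XnsubC //.
Qed.

Lemma qX1 : qX - 1 != 0.
Proof. by have := qXn1 (isT : (0 < 1)%N); rewrite expr1. Qed.

Lemma qintE k : qint k * (qX - 1) = qX ^+ k - 1.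
Proof. by rewrite /qint mulfVK // qX1. Qed.

Lemma qint_ne0 k : (0 < k)%N -> qint k != 0.
Proof.
move=> k0; apply/negP => /eqP h; have := qintE k; rewrite h mul0r => /esym/eqP.
by rewrite (negPf (qXn1 k0)).
Qed.

Lemma qfactS k : qfact k.+1 = qfact k * qint k.+1.
Proof. by rewrite /qfact big_nat_recr. Qed.

Lemma qfact0 : qfact 0 = 1.
Proof. by rewrite /qfact big_geq. Qed.

Lemma qfact_ne0 k : qfact k != 0.
Proof. elim: k => [|k IH]; first by rewrite qfact0 oner_eq0.
rewrite qfactS; apply: mulf_neq0; first exact: IH. exact: qint_ne0. Qed.

Lemma qbinom0 n : qbinom n 0 = 1.
Proof. by rewrite /qbinom subn0 qfact0 mul1r (divff (qfact_ne0 n)). Qed.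

Lemma qbinomnn n : qbinom n n = 1.
Proof. by rewrite /qbinom leqnn subnn qfact0 mulr1 (divff (qfact_ne0 n)). Qed.

Lemma qbinom_gt n k : (n < k)%N -> qbinom n k = 0.
Proof. by rewrite /qbinom ltnNge => /negPf ->. Qed.

Lemma alg (F : fieldType) (fn fk fr In Ik Ir a b c : F) : fk!=0 -> fr!=0 -> Ik!=0 -> Ir!=0 -> c != 0 ->
  In*c = a*b - 1 -> Ik*c = a - 1 -> Ir * c = b - 1 ->
  fn*In/(fk*Ik*(fr*Ir)) = fn/(fk*(fr*Ir)) + a * (fn/(fk*Ik*fr)).
Proof.
move=> h1 h2 h3 h4 h5 e1 e2 e3.
have -> : In = Ik + a * Ir.
  apply: (mulIf h5); rewrite e1 mulrDl e2 -mulrA e3; ring.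
field. by rewrite h1 h2 h3 h4.
Qed.

Lemma qbinomS n k : qbinom n.+1 k.+1 = qbinom n k + qX ^+ k.+1 * qbinom n k.+1.
Proof.
case: (ltngtP k n) => hk; last first.
- by subst k; rewrite !qbinomnn qbinom_gt // mulr0 addr0.
- by rewrite !qbinom_gt // ?mulr0 ?addr0 // ltnS ltnW.
rewrite /qbinom ltnS (ltnW hk) hk.
have [r ->] : exists r, n = (k + r.+1)%N by exists (n - k.+1)%N; rewrite -addSnnS subnKC.
have -> : ((k + r.+1).+1 - k.+1 = r.+1)%N by rewrite subSS addKn.
have -> : ((k + r.+1) - k = r.+1)%N by rewrite addKn.
have -> : ((k + r.+1) - k.+1 = r)%N by rewrite addnS subSS addKn.
rewrite !qfactS.
apply: (@alg Qq _ _ _ _ _ _ _ (qX ^+ r.+1) _ (qfact_ne0 k) (qfact_ne0 r) (qint_ne0 (ltn0Sn k))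
  (qint_ne0 (ltn0Sn r)) qX1); rewrite ?qintE //.
by rewrite -exprD addSn addnS.
Qed.

Definition P (k : nat) (x : Qq) := \prod_(t < k) (x - qX ^+ t).

Lemma PS k x : x * P k x = P k.+1 x + qX ^+ k * P k x.
Proof. rewrite /P big_ord_recr /=; ring. Qed.

Lemma newton M n x : (n <= M)%N -> x ^+ n = \sum_(k < M.+1) qbinom n k * P k x.
Proof.
elim: n => [|n IH] hn.
  rewrite big_ord_recl qbinom0 /P big_ord0 mulr1 big1 ?addr0 // => i _.
  by rewrite qbinom_gt // mul0r.
rewrite exprS (IH (ltnW hn)) mulr_sumr.
rewrite (eq_bigr (fun k : 'I_M.+1 => qbinom n k * P k.+1 x + qX ^+ k * qbinom n k * P k x)); last first.
  by move=> i _; rewrite mulrCA PS; ring.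
rewrite big_split /= big_ord_recr /= (qbinom_gt (n := n) (k := M)) // mul0r addr0.
rewrite [in X in _ + X = _]big_ord_recl /= expr0 mul1r.
rewrite [RHS]big_ord_recl /= !qbinom0 addrCA; congr (_ + _).
rewrite -big_split /=; apply: eq_bigr => i _.
have -> : bump 0 i = i.+1 by []. rewrite qbinomS; ring.
Qed.

Lemma alg2 (F : fieldType) (fj fk fr Ik Ir c a b e g : F) : fk!=0 -> fr!=0 -> Ik!=0 -> Ir!=0 ->
  Ir * c = b - 1 ->
  fj/(fk*(fr*Ir)) * fk * e * g * (a*b - a) = fj/(fk*Ik*fr) * (fk*Ik) * (e*c) * (g*a).
Proof.
move=> h1 h2 h3 h4 e3.
have -> : a * b - a = a * (Ir * c) by rewrite e3; ring.
field. by rewrite h1 h2 h3 h4.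
Qed.

Lemma PqX j k : P k (qX ^+ j) = qbinom j k * qfact k * (qX - 1) ^+ k * qX ^+ 'C(k, 2).
Proof.
case: (leqP k j) => hk; last first.
  rewrite qbinom_gt // !mul0r /P (bigD1 (Ordinal hk)) //= subrr mul0r //.
elim: k hk => [|k IH] hk.
  by rewrite /P big_ord0 qbinom0 qfact0 !expr0 !mulr1.
rewrite /P big_ord_recr /= -/(P k _) (IH (ltnW hk)).
have [r ->] : exists r, j = (k + r.+1)%N by exists (j - k.+1)%N; rewrite -addSnnS subnKC.
clear IH hk.
have hk : (k < k + r.+1)%N by rewrite -addSnnS leq_addr.
rewrite /qbinom (ltnW hk) hk.
have -> : ((k + r.+1) - k = r.+1)%N by rewrite addKn.
have -> : ((k + r.+1) - k.+1 = r)%N by rewrite addnS subSS addKn.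
rewrite !qfactS binS bin1 !exprD [(qX - 1) ^+ k.+1]exprSr.
exact: (@alg2 Qq _ _ _ _ _ _ _ (qX ^+ r.+1) _ _ (qfact_ne0 k) (qfact_ne0 r) (qint_ne0 (ltn0Sn k))
  (qint_ne0 (ltn0Sn r)) (qintE r.+1)).
Qed.

Lemma VGDG M : Vq M.+1 = Gq M.+1 *m Dq M.+1 *m (Gq M.+1)^T.
Proof.
apply/matrixP => i j; rewrite /Dq mul_mx_diag !mxE.
transitivity (\sum_(k < M.+1) qbinom j k * P k (qX ^+ i)).
  rewrite [LHS]exprM; exact: (@newton M j (qX ^+ i) (ltn_ord j)).
apply: eq_bigr => k _; rewrite !mxE PqX; ring.
Qed.

Lemma Gunit M : Gq M.+1 \in unitmx.
Proof.
have ht : is_trig_mx (Gq M.+1).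
  apply/is_trig_mxP => i j hij; rewrite mxE; exact: qbinom_gt.
rewrite unitmxE (det_trig ht) big1; first exact: unitr1.
move=> i _; rewrite mxE; exact: qbinomnn.
Qed.

Theorem lemma3p5 (m : nat) (hm : (1 <= m)%N) :
  Vq m *m (invmx (Gq m))^T = Gq m *m Dq m.
Proof.
case: m hm => [|M] hm; first by exfalso; move: hm; rewrite ltnn.
rewrite VGDG.
rewrite -mulmxA.
rewrite -trmx_mul.
rewrite (mulVmx (Gunit M)).
rewrite trmx1 mulmx1.
reflexivity.
Qed.
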